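(* Let $p,k$ be integers with $k\ge 2$ and $p\ge 2k$, and let $G=J(p,k)$ be the Johnson graph, with $n$ vertices and $m$ edges. Let $\mu_1\ge\cdots\ge\mu_n$ be the eigenvalues of the adjacency matrix of $G$, let $n^+$ be the number of positive eigenvalues, let $\omega=\omega(G)$ be the clique number of $G$, and let $\ell=\min(n^+,\omega)$. Then \[ \mu_1^2+\mu_2^2+\cdots+\mu_\ell^2\le \frac{2m(\omega-1)}{\omega}. \]
   Context: The Johnson graph $J(p,k)$ has as vertices the $k$-element subsets of a $p$-element set, two vertices being adjacent if and only if their intersection has exactly $k-1$ elements. Eigenvalues are those of the adjacency matrix. *)

(* Defs.v *)
From mathcomp Require Import all_boot all_order all_algebra.
Set Implicit Arguments. Unset Strict Implicit. Unset Printing Implicit Defensive.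
Import Order.TTheory GRing.Theory Num.Theory.

Notation johnson_vertex p k := {A : {set 'I_p} | #|A| == k}.

Definition johnson_adj (p k : nat) (x y : johnson_vertex p k) : bool :=
  #|(val x) :&: (val y)| == k.-1.

Definition johnson_n (p k : nat) : nat := #|{: johnson_vertex p k}|.

Definition johnson_adjmx (R : nzRingType) (p k : nat) : 'M[R]_(johnson_n p k) :=
  \matrix_(i, j) (johnson_adj (enum_val i) (enum_val j))%:R%R.

Definition johnson_edges (p k : nat) : {set {set johnson_vertex p k}} :=
  [set E : {set johnson_vertex p k} |
     [exists x, exists y, [&& x != y, johnson_adj x y & E == [set x; y]]]].

Definition johnson_m (p k : nat) : nat := #|johnson_edges p k|.

Definition johnson_clique (p k : nat) (S : {set johnson_vertex p k}) : bool :=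
  [forall x in S, forall y in S, (x != y) ==> johnson_adj x y].

Definition johnson_omega (p k : nat) : nat :=
  \max_(S : {set johnson_vertex p k} | johnson_clique S) #|S|.

(* Main.v *)
Require Import Defs.
From mathcomp Require Import all_boot all_order all_algebra ring zify.
Set Implicit Arguments. Unset Strict Implicit. Unset Printing Implicit Defensive.
Import Order.TTheory GRing.Theory Num.Theory.
Lemma natineq p k n r w : (2 <= k)%N -> (2 * k <= p)%N -> (n * k = r * (p - k).+1)%N ->
  ((p - k).+1 <= w)%N -> (n * (k * (p - k)) <= w * (k ^ 2 * (n - r)))%N.
Proof.
move=> k2 pk dc hw.
apply: (@leq_trans ((p - k).+1 * (k ^ 2 * (n - r)))); last by apply: leq_mul.
have e1 : ((p - k).+1 * (k ^ 2 * (n - r)) = k * k * n * (p - 2 * k).+1)%N.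
  have hq : ((n - r) * (p - k).+1 = n * (p - 2 * k).+1)%N.
    rewrite mulnBl -dc -mulnBr; congr (n * _); lia.
  have -> : (k * k * n * (p - 2 * k).+1 = k * k * (n * (p - 2 * k).+1))%N.
    by rewrite !mulnA.
  rewrite -hq; set a := (n - r)%N; set q := (p - k).+1.
  clearbody a q; nia.
rewrite e1.
have : (p - k <= k * (p - 2 * k).+1)%N by nia.
nia.
Qed.


Lemma card_subsets_in p j (S : {set 'I_p}) :
  #|[set c : {B : {set 'I_p} | #|B| == j} | val c \subset S]| = 'C(#|S|, j).
Proof.
rewrite -cards_draws -(card_imset _ val_inj).
apply: eq_card => B; rewrite !inE.
apply/imsetP/andP => [[c] | [BS Bj]].
  by rewrite inE => cS ->; split => //; exact: (valP c).
by exists (exist _ B Bj); rewrite ?inE.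
Qed.

Lemma card_supersets p k (c : {set 'I_p}) : #|c| = k.-1 -> (0 < k)%N -> (k <= p)%N ->
  #|[set v : johnson_vertex p k | c \subset val v]| = (p - k).+1.
Proof.
move=> ck k0 kp.
rewrite -(card_imset _ val_inj).
have -> : [set val x | x in [set v : johnson_vertex p k | c \subset val v]]
   = @setC _ @: [set D : {set 'I_p} | D \subset ~: c & #|D| == (p - k)%N].
  apply/setP => B; apply/imsetP/imsetP => [[v] | [D]].
    rewrite inE => cv ->; exists (~: val v); last by rewrite setCK.
    rewrite inE setCS cv /=.
    move: (valP v) (cardsC (val v)) => /eqP; rewrite card_ord /= => vk h.
    apply/eqP; lia.
  rewrite inE => /andP [Dc /eqP Dk] ->.
  have Bk : #|~: D| == k.
    have := cardsC D; rewrite card_ord Dk => h; apply/eqP; lia.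
  by exists (exist _ (~: D) Bk); rewrite // inE /= -setCS setCK.
rewrite card_imset; last exact: (@setC_inj _).
rewrite cards_draws.
have := cardsC c; rewrite card_ord ck => h.
have -> : #|~: c| = (p - k).+1 by lia.
exact: binSn.
Qed.

Lemma inter_count p k (v w : johnson_vertex p k) : (0 < k)%N ->
  'C(#|val v :&: val w|, k.-1) = (johnson_adj v w + k * (v == w))%N.
Proof.
case: k v w => // k v w _ /=; rewrite /johnson_adj /=.
have vk := eqP (valP v); have wk := eqP (valP w).
case: (eqVneq v w) => [<- | ne].
  by rewrite setIid vk muln1 binSn gtn_eqF.
rewrite muln0 addn0.
have lt : (#|val v :&: val w| < k.+1)%N.
  have le := subset_leq_card (subsetIl (val v) (val w)).
  suff neq : #|val v :&: val w| != #|val v|.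
    by rewrite vk in le neq; rewrite ltn_neqAle neq.
  apply: contra ne => /eqP e.
  have /eqP e2 : val v :&: val w == val v.
    by rewrite -(subset_leqif_cards (subsetIl (val v) (val w))) e.
  apply/eqP/val_inj/eqP; rewrite eqEcard wk vk leqnn andbT.
  by apply/setIidPl.
move: lt; rewrite ltnS leq_eqVlt => /orP [/eqP -> | lt].
  by rewrite binn eqxx.
by rewrite bin_small // ltn_eqF.
Qed.

Lemma sum_b2n (T : finType) (P : pred T) :
  (\sum_(i : T) (P i : nat))%N = #|[set i | P i]|.
Proof.
rewrite -sum1_card [in RHS]big_mkcond /=; apply: eq_bigr => i _.
by rewrite inE; case: (P i).
Qed.

Notation CT p k := {B : {set 'I_p} | #|B| == k.-1}.

Lemma degree p k (v : johnson_vertex p k) : (0 < k)%N -> (k <= p)%N ->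
  (\sum_(w : johnson_vertex p k) johnson_adj v w)%N = (k * (p - k))%N.
Proof.
move=> k0 kp.
have E : (\sum_(w : johnson_vertex p k) (johnson_adj v w + k * (v == w)))%N
         = (k * (p - k).+1)%N.
  transitivity (\sum_(w : johnson_vertex p k) \sum_(c : CT p k)
        ((val c \subset val v) && (val c \subset val w) : nat))%N.
    apply: eq_bigr => w _; rewrite -inter_count // -card_subsets_in -sum_b2n.
    by apply: eq_bigr => c _; rewrite subsetI.
  rewrite exchange_big /=.
  transitivity (\sum_(c : CT p k) ((val c \subset val v) : nat) * (p - k).+1)%N.
    apply: eq_bigr => c _; case: (val c \subset val v) => /=; last first.
      by rewrite big1.
    rewrite mul1n -(card_supersets (eqP (valP c))) // -sum_b2n.
    by apply: eq_bigr.
  rewrite -big_distrl /= sum_b2n card_subsets_in (eqP (valP v)).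
  by case: k k0 kp {v} => // k _ _; rewrite binSn.
have E2 : (\sum_(w : johnson_vertex p k) k * (v == w))%N = k.
  rewrite (bigD1 v) //= eqxx muln1 big1 ?addn0 // => w wv.
  by rewrite eq_sym (negbTE wv) muln0.
rewrite big_split /= E2 in E.
by move: E; rewrite mulnS addnC => /eqP; rewrite eqn_add2l => /eqP.
Qed.

Lemma double_count p k : (0 < k)%N -> (k <= p)%N ->
  (#|{: johnson_vertex p k}| * k = #|{: CT p k}| * (p - k).+1)%N.
Proof.
move=> k0 kp.
transitivity (\sum_(v : johnson_vertex p k) \sum_(c : CT p k)
        ((val c \subset val v) : nat))%N.
  rewrite -sum_nat_const; apply: eq_bigr => v _.
  rewrite sum_b2n card_subsets_in (eqP (valP v)).
  by case: k k0 kp {v} => // k _ _; rewrite binSn.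
rewrite exchange_big /= -sum_nat_const; apply: eq_bigr => c _.
by rewrite sum_b2n card_supersets // (eqP (valP c)).
Qed.

Lemma omega_ge p k : (0 < k)%N -> (k <= p)%N -> ((p - k).+1 <= johnson_omega p k)%N.
Proof.
move=> k0 kp.
have h : (k.-1 <= p)%N by apply: leq_trans (leq_pred k) kp.
set c0 := [set widen_ord h i | i : 'I_k.-1].
have c0k : #|c0| = k.-1.
  by rewrite card_imset ?cardsT ?card_ord //; by move=> i j /(congr1 val) /= /val_inj.
rewrite -(card_supersets c0k k0 kp).
apply: (@leq_bigmax_cond _ (fun S => johnson_clique S) (fun S => #|S|)).
apply/forallP => x; apply/implyP => xS; apply/forallP => y; apply/implyP => yS.
apply/implyP => xy.
have := inter_count x y k0; rewrite (negbTE xy) muln0 addn0 => e.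
have : (0 < 'C(#|val x :&: val y|, k.-1))%N.
  rewrite bin_gt0 -c0k subset_leq_card // subsetI.
  by rewrite inE in xS; rewrite inE in yS; rewrite xS yS.
by rewrite e; case: johnson_adj.
Qed.

Lemma adj_sym p k (v w : johnson_vertex p k) : johnson_adj v w = johnson_adj w v.
Proof. by rewrite /johnson_adj setIC. Qed.

Lemma adj_irr p k (v : johnson_vertex p k) : (0 < k)%N -> johnson_adj v v = false.
Proof.
by rewrite /johnson_adj setIid (eqP (valP v)); case: k v => // k v _ /=; rewrite gtn_eqF.
Qed.

Lemma edges2 p k : (0 < k)%N ->
  (2 * johnson_m p k = \sum_(v : johnson_vertex p k) \sum_(w : johnson_vertex p k)
      johnson_adj v w)%N.
Proof.
move=> k0; rewrite pair_big /=.
have -> : (\sum_(u : (johnson_vertex p k * johnson_vertex p k)%type) johnson_adj u.1 u.2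
   = \sum_(u : (johnson_vertex p k * johnson_vertex p k)%type | johnson_adj u.1 u.2) 1)%N.
  by rewrite [in RHS]big_mkcond; apply: eq_bigr => u _; case: johnson_adj.
rewrite (partition_big (fun u => [set u.1; u.2]) (mem (johnson_edges p k))) /=;
  last first.
  move=> u au; rewrite inE; apply/existsP; exists u.1; apply/existsP; exists u.2.
  rewrite au eqxx andbT andbT; apply: contraTneq au => ->; by rewrite adj_irr.
rewrite /johnson_m mulnC -sum_nat_const; apply: eq_bigr => E.
rewrite inE => /existsP [x /existsP [y /and3P [xy axy /eqP ->]]].
rewrite sum1_card.
rewrite (@eq_card _ _ (pred2 (x, y) (y, x))); last first.
  move=> [a b]; rewrite !inE /=; apply/andP/orP.
    move=> [ab /eqP e].
    have ax : a \in [set x; y] by rewrite -e set21.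
    have bx : b \in [set x; y] by rewrite -e set22.
    have anb : a != b by apply: contraTneq ab => ->; rewrite adj_irr.
    rewrite !inE in ax bx.
    case/orP: ax => /eqP ax; case/orP: bx => /eqP bx; subst a b.
    - by rewrite eqxx in anb.
    - by left.
    - by right.
    - by rewrite eqxx in anb.
  case => /eqP [-> ->]; split => //; first by rewrite adj_sym.
  by rewrite setUC.
by rewrite card2 xpair_eqE negb_and xy.
Qed.

Local Open Scope ring_scope.

Definition Wm (R : nzRingType) p k : 'M[R]_(johnson_n p k, #|{: CT p k}|) :=
  \matrix_(i, j) ((val (enum_val j : CT p k) \subset val (enum_val i : johnson_vertex p k)) : nat)%:R.

Lemma adjmx_eq (R : comNzRingType) p k : (0 < k)%N ->
  johnson_adjmx R p k = Wm R p k *m (Wm R p k)^T - (k%:R)%:M.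
Proof.
move=> k0; apply/matrixP => i j; rewrite !mxE.
under eq_bigr do rewrite !mxE -natrM mulnb.
rewrite -natr_sum.
rewrite -(big_enum_val (fun c : CT p k =>
   ((val c \subset val (enum_val i)) && (val c \subset val (enum_val j)) : nat))) /=.
rewrite (eq_bigl xpredT) //.
rewrite sum_b2n.
have -> : [set c : CT p k | (val c \subset val (enum_val i))
                        && (val c \subset val (enum_val j))]
       = [set c : CT p k | val c \subset val (enum_val i) :&: val (enum_val j)].
  by apply/setP => c; rewrite !inE subsetI.
rewrite card_subsets_in inter_count // (inj_eq enum_val_inj).
case: (i == j); last by rewrite muln0 addn0 subr0.
by rewrite muln1 natrD addrK.
Qed.

Lemma tr_sq (R : comNzRingType) p k :
  \tr (johnson_adjmx R p k *m johnson_adjmx R p k) =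
  (\sum_(v : johnson_vertex p k) \sum_(w : johnson_vertex p k) johnson_adj v w)%N%:R.
Proof.
rewrite /mxtrace natr_sum.
rewrite (big_enum_val (fun v : johnson_vertex p k =>
  (\sum_(w : johnson_vertex p k) johnson_adj v w)%N%:R)) /=.
apply: eq_bigr => i _; rewrite mxE natr_sum.
rewrite (big_enum_val (fun w : johnson_vertex p k =>
  (johnson_adj (enum_val i) w : nat)%:R)) /=.
apply: eq_bigr => j _; rewrite !mxE -natrM [johnson_adj (enum_val j) _]adj_sym.
by rewrite mulnb andbb.
Qed.

Lemma split_sq (R : realFieldType) (mu : seq R) (c : R) : c < 0 ->
  \sum_(x <- mu | 0 < x) x ^+ 2 + c ^+ 2 * (count_mem c mu)%:R
    <= \sum_(x <- mu) x ^+ 2.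
Proof.
move=> c0; elim: mu => [|a s IH]; first by rewrite !big_nil /= mulr0 addr0.
rewrite !big_cons /=.
have ha : 0 <= a ^+ 2 by rewrite sqr_ge0.
case: (ltP 0 a) => a0.
  have -> : (a == c) = false by apply/negbTE; rewrite gt_eqF // (lt_trans c0 a0).
  by rewrite add0n -addrA lerD2l.
case: (eqVneq a c) => [ac | ac].
  rewrite ac /= natrD mulrDr mulr1 addrCA lerD2l; exact: IH.
rewrite /= add0n; apply: le_trans IH _; rewrite lerDr //.
Qed.

Lemma prefix_pos (R : realFieldType) (mu : seq R) (l : nat) :
  sorted >=%R mu -> (l <= count (fun x => (0 < x)%R) mu)%N ->
  \sum_(i < l) mu`_i ^+ 2 <= \sum_(x <- mu | 0 < x) x ^+ 2.
Proof.
elim: mu l => [|a s IH] l.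
  by move=> _; rewrite leqn0 => /eqP ->; rewrite !big_nil big_ord0.
move=> srt; have ss := path_sorted srt.
case: l => [|l] hl.
  by rewrite big_ord0; apply: sumr_ge0 => x _; rewrite sqr_ge0.
have all_le : all (fun x => x <= a) s.
  have tr : transitive (>=%R : rel R) by move=> y x z h1 h2; exact: le_trans h2 h1.
  by move: srt; rewrite /= (path_sortedE tr) => /andP [].
have a0 : 0 < a.
  rewrite ltNge; apply/negP => a0; move: hl => /=.
  have -> : count (fun x => 0 < x) s = 0%N.
    apply/eqP; rewrite -leqn0 leqNgt -has_count; apply/hasPn => x xs.
    by rewrite -leNgt; apply: le_trans a0; exact: (allP all_le x xs).
  by rewrite ltNge a0.
rewrite big_ord_recl big_cons a0 /=; apply: lerD => //.
apply: IH => //; move: hl; by rewrite /= a0.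
Qed.


Lemma char_poly_horner (R : comNzRingType) n (A : 'M[R]_n) x :
  (char_poly A).[x] = \det (x%:M - A).
Proof.
rewrite /char_poly -horner_evalE -det_map_mx; congr (\det _).
by apply/matrixP => i j; rewrite !mxE rmorphB rmorphMn /= !horner_evalE hornerX hornerC.
Qed.

Lemma sylv (R : comNzRingType) n r (W : 'M[R]_(n,r)) (V : 'M[R]_(r,n)) y :
  y ^+ r * \det (y%:M - W *m V) = y ^+ n * \det (y%:M - V *m W).
Proof.
have e1 : block_mx 1%:M 0 (-V) y%:M *m block_mx y%:M W V 1%:M
          = block_mx y%:M W 0 (y%:M - V *m W).
  rewrite mulmx_block !mul1mx !mul0mx !addr0 !mulmx1 mul_scalar_mx mul_mx_scalar.
  by rewrite scalerN addNr mulNmx [in RHS]addrC.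
have e2 : block_mx y%:M W V 1%:M *m block_mx 1%:M 0 (-V) 1%:M
          = block_mx (y%:M - W *m V) W 0 1%:M.
  rewrite mulmx_block !mulmx1 !mulmx0 !mul1mx !add0r mulmxN.
  by rewrite addrN.
have := congr1 determinant e1; rewrite det_mulmx det_lblock det_ublock.
have := congr1 determinant e2; rewrite det_mulmx det_lblock det_ublock.
rewrite !det1 !det_scalar !mulr1 mul1r => -> <-; by [].
Qed.

Lemma prod_sq_aux (R : comNzRingType) (x : R) (s : seq R) :
  (\prod_(m <- s) (x - m)) * ((-1) ^+ size s * \prod_(m <- s) (- x - m))
  = \prod_(m <- s) (x ^+ 2 - m ^+ 2).
Proof.
elim: s => [|a s IH]; first by rewrite !big_nil expr0 !mul1r.
rewrite !big_cons /= -IH exprS; ring.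
Qed.

Lemma poly_eq0_sq (R : numFieldType) (D : {poly R}) :
  (forall x : R, D.[x ^+ 2] = 0) -> D = 0.
Proof.
move=> HD; apply/eqP; apply/negPn/negP => D0.
set rs := [seq (i%:R : R) ^+ 2 | i <- iota 0 (size D)].
suff : (size rs < size D)%N by rewrite size_map size_iota ltnn.
apply: max_poly_roots => //.
  by apply/allP => y /mapP [i _ ->]; rewrite /root HD.
rewrite map_inj_in_uniq ?iota_uniq // => i j _ _.
by rewrite -!natrX => /eqP; rewrite eqr_nat eqn_exp2r // => /eqP.
Qed.

Lemma sum_sq_roots (R : numFieldType) n (A : 'M[R]_n) (mu : seq R) :
  char_poly A = \prod_(x <- mu) ('X - x%:P) ->
  \sum_(x <- mu) x ^+ 2 = \tr (A *m A).
Proof.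
move=> Hmu.
have sz : size mu = n.
  have := congr1 (fun q : {poly R} => size q) Hmu; rewrite /= size_char_poly (size_prod_XsubC mu id).
  by case.
set Q := \prod_(x <- map (fun x => x ^+ 2) mu) ('X - x%:P).
have key : char_poly (A *m A) = Q.
  apply/eqP; rewrite -subr_eq0; apply/eqP; apply: poly_eq0_sq => x.
  rewrite hornerD hornerN char_poly_horner.
  have -> : (x ^+ 2)%:M - A *m A = (x%:M - A) *m (x%:M + A).
    rewrite mulmxBl !mulmxDr mul_scalar_mx mul_mx_scalar scale_scalar_mx expr2.
    by rewrite opprD addrA mul_scalar_mx addrK.
  rewrite det_mulmx -char_poly_horner.
  have -> : x%:M + A = - ((- x)%:M - A) by rewrite opprB raddfN /= opprK addrC.
  rewrite -scaleN1r detZ -char_poly_horner Hmu !horner_prod -sz.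
  under eq_bigr do rewrite hornerXsubC.
  under [in X in _ * (_ * X)]eq_bigr do rewrite hornerXsubC.
  rewrite prod_sq_aux big_map.
  by under [X in _ - X]eq_bigr do rewrite hornerXsubC; rewrite subrr.
rewrite {}/Q in key.
case: n A Hmu sz key => [|n] A Hmu sz key.
  by case: mu Hmu sz key => // _ _ _; rewrite big_nil /mxtrace big_ord0.
have := char_poly_trace (A *m A) (ltn0Sn n).
rewrite key -{1}sz -(size_map (fun x => x ^+ 2) mu) coefPn_prod_XsubC.
  by rewrite big_map => /oppr_inj.
by rewrite size_map sz.
Qed.


Lemma count_shift (R : fieldType) n r (A : 'M[R]_n) (W : 'M[R]_(n,r))
   (V : 'M[R]_(r,n)) (c : R) (mu : seq R) :
  A = W *m V - c%:M -> char_poly A = \prod_(x <- mu) ('X - x%:P) ->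
  (n - r <= count_mem (- c) mu)%N.
Proof.
move=> HA Hmu.
set y : {poly R} := 'X + c%:P.
have H : char_poly A = \det (y%:M - map_mx polyC W *m map_mx polyC V).
  rewrite /char_poly /char_poly_mx HA map_mxB map_mxM map_scalar_mx /=.
  by rewrite opprB addrA -raddfD.
have E := sylv (map_mx polyC W) (map_mx polyC V) y; rewrite -H in E.
have y0 : y != 0.
  by rewrite /y -[c]opprK polyCN polyXsubC_eq0.
have [le_rn | lt_nr] := leqP r n; last first.
  by rewrite (eqP (ltnW lt_nr)).
have Hd : y ^+ (n - r) %| char_poly A.
  move: E; rewrite -[in y ^+ n](subnKC le_rn) exprD -mulrA => /mulfI.
  by rewrite expf_neq0 // => /(_ isT) ->; rewrite dvdp_mulIl.
rewrite -mu_prod_XsubC -Hmu mup_geq ?monic_neq0 ?char_poly_monic //.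
by rewrite polyCN opprK.
Qed.

Theorem mainTheorem3 (R : rcfType) (p k : nat) (mu : seq R) :
  (2 <= k)%N -> (2 * k <= p)%N ->
  char_poly (johnson_adjmx R p k) = \prod_(x <- mu) ('X - x%:P) ->
  sorted >=%R mu ->
  let npos := count (fun x => 0 < x) mu in
  let w := johnson_omega p k in
  let l := minn npos w in
  \sum_(i < l) (mu`_i) ^+ 2 <=
    2 * (johnson_m p k)%:R * (w.-1)%:R / w%:R.
Proof.
move=> k2 pk Hmu srt.
change (\sum_(i < minn (count (fun x => 0 < x) mu) (johnson_omega p k)) (mu`_i) ^+ 2
  <= 2 * (johnson_m p k)%:R * ((johnson_omega p k).-1)%:R / (johnson_omega p k)%:R).
set npos := count _ mu; set w := johnson_omega p k; set l := minn npos w.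
have k0 : (0 < k)%N by lia.
have kp : (k <= p)%N by lia.
set n := johnson_n p k.
set r := #|{: CT p k}|.
set T := (\sum_(v : johnson_vertex p k) \sum_(u : johnson_vertex p k) johnson_adj v u)%N.
have HA := adjmx_eq R p k0.
have Hcnt := count_shift HA Hmu.
have Hsq : \sum_(x <- mu) x ^+ 2 = T%:R by rewrite (sum_sq_roots Hmu) tr_sq.
have HT : T = (n * (k * (p - k)))%N.
  rewrite /T (eq_bigr (fun _ => (k * (p - k))%N)); last by move=> v _; exact: degree.
  by rewrite sum_nat_const.
have Hdc := double_count k0 kp.
have Hm := edges2 p k0.
have Hw := omega_ge k0 kp.
have hl : (l <= npos)%N := geq_minl _ _.
have h1 := prefix_pos srt hl.
have Hdc' : (n * k = r * (p - k).+1)%N := Hdc.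
have Hnat := natineq k2 pk Hdc' Hw.
rewrite -HT in Hnat.
rewrite -/T in Hm.
have wpos : (0 < w)%N by apply: leq_ltn_trans Hw.
have c0 : - (k%:R) < 0 :> R by rewrite oppr_lt0 ltr0n.
have h2 := split_sq mu c0.
rewrite Hsq sqrrN in h2.
set K : R := (k%:R) ^+ 2 * (n - r)%:R.
have hP : \sum_(x <- mu | 0 < x) x ^+ 2 <= T%:R - K.
  rewrite lerBrDr; apply: le_trans h2; rewrite lerD2l /K.
  by rewrite ler_wpM2l ?sqr_ge0 // ler_nat.
have hT : T%:R <= w%:R * K :> R.
  by rewrite /K -natrX -!natrM ler_nat.
have e2 : 2 * (johnson_m p k)%:R = T%:R :> R by rewrite -Hm natrM.
have ew : (w%:R : R) = (w.-1)%:R + 1 by rewrite natr1 prednK.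
rewrite e2 ler_pdivlMr ?ltr0n //.
apply: (@le_trans _ _ ((T%:R - K) * w%:R)).
  by rewrite ler_wpM2r ?ler0n // (le_trans h1 hP).
have ew' : ((w.-1)%:R : R) = w%:R - 1 by rewrite ew addrK.
by rewrite ew' mulrBr mulr1 mulrBl lerD2l lerN2 mulrC.
Qed.
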